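(* Let $R$ be a commutative ring and let $g(x)=\sum_{i\ge0}a_ix^i$ and $h(x)=\sum_{i\ge0}b_ix^i$ be formal power series in $R[[x]]$. Then $$g(x)\,h(x)=\sum_{m=0}^{\infty}x^m\sum_{k=0}^{m}\sigma_k\sum_{j=k}^{m}T(k+m-j,k)\,T(j,k)\Bigl(\sum_{t=j-k}^{j}T(k,j-t)\,\sigma_t\,a_t\Bigr)\Bigl(\sum_{t=j-k}^{j}T(k,j-t)\,\sigma_t\,b_t\Bigr).$$
   Context: For integers $0\le k\le n$, $T(n,k)=1$ if the bitwise AND of the binary expansions of $k$ and $n-k$ is $0$, and $T(n,k)=0$ otherwise (equivalently $T(n,k)=\binom{n}{k}\bmod 2$; this is the Sierpiński triangle, OEIS A047999). For an integer $k\ge0$, $\sigma_k=-1$ if the number of ones in the binary expansion of $k$ is odd and $\sigma_k=1$ otherwise. *)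

(* Defs.v *)
From Stdlib Require Import PeanoNat.
From mathcomp Require Import all_boot all_algebra.
Set Implicit Arguments. Unset Strict Implicit. Unset Printing Implicit Defensive.
Import GRing.Theory.
Local Open Scope ring_scope.

(* Sierpinski triangle A047999: T(n,k) = 1 iff k <= n and (k AND (n-k)) = 0 *)
Definition Tsier (n k : nat) : bool :=
  (k <= n)%N && (Nat.land k (n - k) == 0)%N.

(* number of ones in the binary expansion of n (n < 2^n, so n bits suffice) *)
Definition popcount (n : nat) : nat := (\sum_(i < n) Nat.testbit n i)%N.

Definition sigma (R : pzRingType) (k : nat) : R := (-1) ^+ popcount k.

(* Main.v *)
Require Import Defs.
From Stdlib Require Import PeanoNat.
From mathcomp Require Import all_boot all_algebra zify ring.
Import GRing.Theory.

Lemma bitsE {a b : nat} : a = b -> forall x, Nat.testbit a x = Nat.testbit b x.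
Proof. by move=> ->. Qed.

Ltac bsimpl := repeat (first [rewrite Nat.land_spec | rewrite Nat.lor_spec | rewrite Nat.lxor_spec | rewrite Nat.ldiff_spec | rewrite Nat.bits_0]).
Ltac bfin := repeat (match goal with |- context [Nat.testbit ?a ?x] => destruct (Nat.testbit a x) end);
  cbn; intros; try discriminate; try reflexivity; try congruence.
Ltac bext := apply Nat.bits_inj; intro.

Lemma add_disj a b : Nat.land a b = 0 -> a + b = Nat.lor a b.
Proof. move=> H; rewrite -Nat.lxor_lor // -Nat.add_nocarry_lxor //. Qed.

Lemma sub_sub a b : Nat.land a b = b -> a - b = Nat.ldiff a b.
Proof.
move=> H; apply: Nat.sub_nocarry_ldiff; bext.
move: (bitsE H n); bsimpl; bfin.
Qed.

Lemma sub_le a b : Nat.land a b = b -> b <= a.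
Proof.
move=> H. have E: a = b + Nat.ldiff a b.
  rewrite add_disj; last by bext; bsimpl; bfin.
  bext; move: (bitsE H n); bsimpl; bfin.
lia.
Qed.

Lemma le_lor a b : a <= Nat.lor a b.
Proof.
have E: Nat.lor a b = a + Nat.ldiff b a.
  rewrite add_disj; last by bext; bsimpl; bfin.
  bext; bsimpl; bfin.
lia.
Qed.

Lemma test s: Nat.land (Nat.lor s 1) s = s.
Proof. bext; bsimpl; bfin. Qed.

Lemma bit_high n x : n <= x -> Nat.testbit n x = false.
Proof.
move=> H; case: n H => [|n] H; first by rewrite Nat.bits_0.
apply: Nat.bits_above_log2; have := Nat.log2_lt_lin n.+1; lia.
Qed.

Lemma popcount_range n L : n <= L -> popcount n = (\sum_(x < L) Nat.testbit n x)%N.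
Proof.
move=> H; rewrite /popcount -(subnKC H) big_split_ord /=.
rewrite [X in (_ + X)%N]big1 ?addn0 // => i _; rewrite bit_high //=; lia.
Qed.

Lemma popcount_add a b : Nat.land a b = 0 -> popcount (a + b) = (popcount a + popcount b)%N.
Proof.
move=> H; rewrite (popcount_range _ (a + b)) // (popcount_range a (a + b)); last lia.
rewrite (popcount_range b (a + b)); last lia.
rewrite -big_split /=; rewrite add_disj //; apply: eq_bigr => i _.
move: (bitsE H i); bsimpl; bfin.
Qed.

Lemma popcount_pow2 i : popcount (Nat.pow 2 i) = 1%N.
Proof.
have lt : (i < Nat.pow 2 i)%N by apply/ltP; apply: Nat.pow_gt_lin_r; lia.
rewrite (popcount_range _ (Nat.pow 2 i)) //.
rewrite (bigD1 (Ordinal lt)) //= big1 ?addn0 => [|x Hx].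
  by rewrite Nat.pow2_bits_eqb Nat.eqb_refl.
rewrite Nat.pow2_bits_eqb; case: (Nat.eqb_spec i x) => // E.
by move: Hx; rewrite -val_eqE /= -E eqxx.
Qed.

Definition sz (n : nat) : int := (-1) ^+ popcount n.

Lemma sz_add a b : Nat.land a b = 0 -> sz (a + b) = (sz a * sz b)%R.
Proof. by move=> H; rewrite /sz popcount_add // exprD. Qed.

Lemma sz_pow2 i : sz (Nat.pow 2 i) = (-1)%R.
Proof. by rewrite /sz popcount_pow2. Qed.

Lemma sz_toggle k i : sz (Nat.lxor k (Nat.pow 2 i)) = (- sz k)%R.
Proof.
case Hk: (Nat.testbit k i).
  have D : Nat.land (Nat.lxor k (Nat.pow 2 i)) (Nat.pow 2 i) = 0.
    bext; bsimpl; rewrite Nat.pow2_bits_eqb; case: (Nat.eqb_spec i n) => [<-|_]; rewrite ?Hk; bfin.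
  have E : k = Nat.lxor k (Nat.pow 2 i) + Nat.pow 2 i.
    rewrite add_disj //; bext; bsimpl; rewrite Nat.pow2_bits_eqb; case: (Nat.eqb_spec i n) => [<-|_]; rewrite ?Hk; bfin.
  by rewrite {2}E sz_add // sz_pow2 mulrN1 opprK.
have D : Nat.land k (Nat.pow 2 i) = 0.
  bext; bsimpl; rewrite Nat.pow2_bits_eqb; case: (Nat.eqb_spec i n) => [<-|_]; rewrite ?Hk; bfin.
by rewrite Nat.lxor_lor // -add_disj // sz_add // sz_pow2 mulrN1.
Qed.

Lemma inv0 n (P : pred nat) (f : nat -> nat) :
 (forall k, (k < n.+1)%N -> P k -> [/\ (f k < n.+1)%N, P (f k), f (f k) = k & sz (f k) = (- sz k)%R]) ->
 (\sum_(k < n.+1 | P k) sz k)%R = 0%R.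
Proof.
move=> H.
pose h (k : 'I_n.+1) : 'I_n.+1 := if P k then inord (f k) else k.
have hK : involutive h.
  move=> k; rewrite /h; case Pk: (P k); last by rewrite Pk.
  have [lt Pf ff _] := H k (ltn_ord k) Pk.
  rewrite inordK // Pf; apply: val_inj; rewrite /= inordK ff //.
have E : (\sum_(k < n.+1 | P k) sz k = - \sum_(k < n.+1 | P k) sz k)%R.
  rewrite {1}(reindex_inj (inv_inj hK)) /= -sumrN; apply: eq_big => k.
    rewrite /h; case Pk: (P k) => //.
    by have [lt Pf _ _] := H k (ltn_ord k) Pk; rewrite inordK.
  rewrite /h; case Pk: (P k); last by rewrite Pk. move=> _.
  rewrite inordK; first by have [_ _ _ ->] := H k (ltn_ord k) Pk.
  by have [] := H k (ltn_ord k) Pk.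
move: E; set S := (\sum_(_ < _ | _) _)%R; lia.
Qed.

Lemma TsierE n k : Tsier n k = (Nat.land k n == k).
Proof.
rewrite /Tsier; apply/andP/eqP => [[le /eqP H]|H].
  have E : n = Nat.lor k (n - k) by rewrite -add_disj //; lia.
  rewrite E; bext; move: (bitsE H n0); bsimpl; bfin.
have le : (k <= n)%N by apply: sub_le; rewrite Nat.land_comm.
split => //; rewrite sub_sub; last by rewrite Nat.land_comm.
apply/eqP; bext; move: (bitsE H n0); bsimpl; bfin.
Qed.

Lemma jdet1 k j p : Nat.land k j = k -> (p <= j)%N -> Nat.land (j - p) k = j - p ->
  j = Nat.lor k p.
Proof.
move=> H1 le H3.
have Hs : Nat.land j (j - p) = j - p.
  bext; move: (bitsE H1 n) (bitsE H3 n); bsimpl; bfin.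
have Ep : p = Nat.ldiff j (j - p) by rewrite -sub_sub //; lia.
rewrite Ep; bext; move: (bitsE H1 n) (bitsE H3 n); bsimpl; bfin.
Qed.

Lemma jdet2 k p : [/\ Nat.land k (Nat.lor k p) = k, (p <= Nat.lor k p)%N,
  Nat.land (Nat.lor k p - p) k = Nat.lor k p - p & (Nat.lor k p - k <= p)%N].
Proof.
have E : Nat.lor k p - p = Nat.ldiff (Nat.lor k p) p.
  by rewrite sub_sub //; bext; bsimpl; bfin.
have E3 : Nat.land (Nat.lor k p - p) k = Nat.lor k p - p.
  by rewrite E; bext; bsimpl; bfin.
have L3 : (Nat.lor k p - p <= k)%N by apply: sub_le; rewrite Nat.land_comm.
split => //; first by bext; bsimpl; bfin.
  by rewrite Nat.lor_comm le_lor.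
have := le_lor k p; lia.
Qed.

Lemma key k j p q m : (j <= m)%N ->
 [&& (k <= j)%N, Tsier (k+m-j) k, Tsier j k, (j - k <= p)%N && (p < j.+1)%N, Tsier k (j-p),
     (j - k <= q)%N && (q < j.+1)%N & Tsier k (j-q)]
 = [&& j == Nat.lor k p, Nat.lor k p == Nat.lor k q & Nat.land k (m-j) == 0].
Proof.
move=> jm.
have T1 : Tsier (k+m-j) k = (Nat.land k (m-j) == 0).
  rewrite /Tsier; have -> : (k + m - j - k = m - j)%N by lia.
  by have -> : (k <= k + m - j)%N by lia.
rewrite T1 !TsierE; apply/idP/idP.
  case/and4P => _ -> /eqP Tj /and4P[/andP[_ Pj] /eqP Tp /andP[_ Qj] /eqP Tq].
  have Ep := jdet1 _ _ _ Tj Pj Tp; have Eq := jdet1 _ _ _ Tj Qj Tq.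
  by rewrite -Ep -Eq !eqxx.
case/and3P => /eqP Ej /eqP Epq ->.
have [A1 A2 A3 A4] := jdet2 k p; have [B1 B2 B3 B4] := jdet2 k q.
rewrite Ej; apply/and4P; split => //.
- exact: le_lor.
- by apply/eqP.
apply/and4P; split.
- by apply/andP; split.
- by apply/eqP.
- by rewrite Epq; apply/andP; split.
- by rewrite Epq; apply/eqP.
Qed.

Lemma tog_lor k p i : Nat.testbit p i = true ->
  Nat.lor (Nat.lxor k (Nat.pow 2 i)) p = Nat.lor k p.
Proof.
move=> H; bext; bsimpl; rewrite Nat.pow2_bits_eqb.
case: (Nat.eqb_spec i n) => [<-|_]; move: H; bfin.
Qed.

Lemma tog_land0 k e i : Nat.testbit e i = false -> Nat.land k e = 0 ->
  Nat.land (Nat.lxor k (Nat.pow 2 i)) e = 0.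
Proof.
move=> H H0; bext; move: (bitsE H0 n); bsimpl; rewrite Nat.pow2_bits_eqb.
case: (Nat.eqb_spec i n) => [<-|_]; move: H; bfin.
Qed.

Lemma tog_land k e i : Nat.testbit e i = true -> Nat.land k e = k ->
  Nat.land (Nat.lxor k (Nat.pow 2 i)) e = Nat.lxor k (Nat.pow 2 i).
Proof.
move=> H H0; bext; move: (bitsE H0 n); bsimpl; rewrite Nat.pow2_bits_eqb.
case: (Nat.eqb_spec i n) => [<-|_]; move: H; bfin.
Qed.

Lemma tog_land' d k i : Nat.testbit d i = false -> Nat.land d k = d ->
  Nat.land d (Nat.lxor k (Nat.pow 2 i)) = d.
Proof.
move=> H H0; bext; move: (bitsE H0 n); bsimpl; rewrite Nat.pow2_bits_eqb.
case: (Nat.eqb_spec i n) => [<-|_]; move: H; bfin.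
Qed.

Lemma togK k i : Nat.lxor (Nat.lxor k (Nat.pow 2 i)) (Nat.pow 2 i) = k.
Proof. by rewrite Nat.lxor_assoc Nat.lxor_nilpotent Nat.lxor_0_r. Qed.

Lemma log2_bit a : a <> 0 -> Nat.testbit a (Nat.log2 a) = true.
Proof. exact: Nat.bit_log2. Qed.

Definition Good m p q k := [&& Nat.lor k p == Nat.lor k q, (Nat.lor k p <= m)%N &
   Nat.land k (m - Nat.lor k p) == 0].

Lemma stage1 m p q :
  (\sum_(k < m.+1 | Good m p q k && ~~ (Nat.ldiff (Nat.land p q) (m - Nat.lor k p) == 0)) sz k)%R = 0%R.
Proof.
apply: (inv0 m (fun k => Good m p q k && ~~ (Nat.ldiff (Nat.land p q) (m - Nat.lor k p) == 0)) (fun k => Nat.lxor k (Nat.pow 2 (Nat.log2 (Nat.ldiff (Nat.land p q) (m - Nat.lor k p)))))).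
move=> k _ /andP[/and3P[/eqP Epq Wm /eqP H0] /eqP Hne].
set i := Nat.log2 _.
have Hi := log2_bit _ Hne; rewrite -/i in Hi.
move: Hi; bsimpl => Hi.
have Hp : Nat.testbit p i = true by move: Hi; bfin.
have Hq : Nat.testbit q i = true by move: Hi; bfin.
have He : Nat.testbit (m - Nat.lor k p) i = false by move: Hi; bfin.
have E1 := tog_lor k p i Hp; have E2 := tog_lor k q i Hq.
rewrite E1.
split.
- have := le_lor (Nat.lxor k (Nat.pow 2 i)) p; rewrite E1; lia.
- apply/andP; split; last by apply/eqP.
  apply/and3P; split; first by rewrite E1 E2 Epq.
    by rewrite E1.
  by rewrite E1; apply/eqP; apply: tog_land0.
- by rewrite -/i togK.
- exact: sz_toggle.
Qed.

Lemma interval n d Y : (Y <= n)%N ->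
  (\sum_(k < n.+1 | (Nat.land d k == d) && (Nat.land k Y == k)) sz k)%R =
  if Y == d then sz d else 0%R.
Proof.
move=> Yn.
case: (Nat.eq_dec (Nat.ldiff Y d) 0) => HYd.
  have E : forall k, ((Nat.land d k == d) && (Nat.land k Y == k)) = (Y == d) && (k == d).
    move=> k; apply/andP/andP => [[/eqP H1 /eqP H2]|[/eqP H1 /eqP H2]].
      split; apply/eqP; bext; move: (bitsE H1 n0) (bitsE H2 n0) (bitsE HYd n0); bsimpl; bfin.
    by subst; split; apply/eqP; bext; bsimpl; bfin.
  under eq_bigl => k do rewrite E.
  case: eqP => [YD|_]; last by rewrite big_pred0.
  have dn : (d < n.+1)%N by rewrite -YD.
  rewrite (big_pred1 (Ordinal dn)) //=.
have YD : (Y == d) = false.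
  by apply/eqP => YD; apply: HYd; rewrite YD Nat.ldiff_diag.
rewrite YD.
have Hi := log2_bit _ HYd; move: Hi; set i := Nat.log2 _; bsimpl => Hi.
have HY : Nat.testbit Y i = true by move: Hi; bfin.
have Hd : Nat.testbit d i = false by move: Hi; bfin.
apply: (inv0 n (fun k => (Nat.land d k == d) && (Nat.land k Y == k)) (fun k => Nat.lxor k (Nat.pow 2 i))).
move=> k _ /andP[/eqP H1 /eqP H2].
have G1 := tog_land' d k i Hd H1; have G2 := tog_land k Y i HY H2.
split.
- have := sub_le Y _ (ltac:(rewrite Nat.land_comm; exact G2)); lia.
- by rewrite G1 G2 !eqxx.
- exact: togK.
- exact: sz_toggle.
Qed.

Lemma good2 m p q k :
  Good m p q k && (Nat.ldiff (Nat.land p q) (m - Nat.lor k p) == 0) =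
  [&& Nat.land (Nat.lxor p q) k == Nat.lxor p q, Nat.land k (m - 2 * Nat.land p q) == k,
      (2 * Nat.land p q <= m)%N & Nat.land (m - 2 * Nat.land p q) (Nat.land p q) == 0].
Proof.
set c := Nat.land p q; set Y := m - 2 * c.
apply/idP/idP.
  case/andP => /and3P[/eqP Epq Wm /eqP H0] /eqP Hc.
  set e := m - Nat.lor k p in H0 Hc.
  have Hkc : Nat.land k c = 0.
    bext; move: (bitsE H0 n) (bitsE Hc n); rewrite /c; bsimpl; bfin.
  have Hd : Nat.land (Nat.lxor p q) k = Nat.lxor p q.
    bext; move: (bitsE Epq n); bsimpl; bfin.
  have Ew : Nat.lor k p = k + c.
    rewrite add_disj //; bext; move: (bitsE Epq n); rewrite /c; bsimpl; bfin.
  have Ee : e = c + Nat.ldiff e c.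
    rewrite add_disj; last by bext; bsimpl; bfin.
    bext; move: (bitsE Hc n); bsimpl; bfin.
  have EY : Y = Nat.lor k (Nat.ldiff e c).
    rewrite -add_disj; last by bext; move: (bitsE H0 n); bsimpl; bfin.
    rewrite /Y; lia.
  apply/and4P; split; apply/eqP => //.
  - by rewrite EY; bext; bsimpl; bfin.
  - rewrite /Y; lia.
  - rewrite EY; bext; move: (bitsE Hkc n); bsimpl; bfin.
case/and4P => /eqP Hd /eqP HY H2 /eqP HYc.
have Hkc : Nat.land k c = 0.
  bext; move: (bitsE HY n) (bitsE HYc n); bsimpl; bfin.
have Epq : Nat.lor k p = Nat.lor k q.
  bext; move: (bitsE Hd n); bsimpl; bfin.
have Ew : Nat.lor k p = k + c.
  rewrite add_disj //; bext; move: (bitsE Hd n); rewrite /c; bsimpl; bfin.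
have EY : Y = k + Nat.ldiff Y k.
  rewrite add_disj; last by bext; bsimpl; bfin.
  bext; move: (bitsE HY n); bsimpl; bfin.
have Ee : m - Nat.lor k p = Nat.lor c (Nat.ldiff Y k).
  rewrite -(add_disj c); last by bext; move: (bitsE HYc n); bsimpl; bfin.
  have HYdef : Y = m - 2 * c by []; move: HYdef; clearbody Y; lia.
apply/andP; split; last first.
  by rewrite Ee; apply/eqP; bext; bsimpl; bfin.
apply/and3P; split; apply/eqP => //.
- have HYdef : Y = m - 2 * c by []; move: HYdef; clearbody Y; lia.
- rewrite Ee; bext; move: (bitsE Hkc n); bsimpl; bfin.
Qed.

Lemma pqE p q : [/\ p + q = Nat.lxor p q + 2 * Nat.land p q,
   Nat.land (Nat.lxor p q) (Nat.land p q) = 0 & sz (Nat.lxor p q) = (sz p * sz q)%R].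
Proof.
set c := Nat.land p q; set d := Nat.lxor p q.
have D1 : Nat.land (Nat.ldiff p q) c = 0 by bext; rewrite /c; bsimpl; bfin.
have D2 : Nat.land (Nat.ldiff q p) c = 0 by bext; rewrite /c; bsimpl; bfin.
have D3 : Nat.land (Nat.ldiff p q) (Nat.ldiff q p) = 0 by bext; bsimpl; bfin.
have Ep : p = Nat.ldiff p q + c by rewrite add_disj //; bext; rewrite /c; bsimpl; bfin.
have Eq : q = Nat.ldiff q p + c by rewrite add_disj //; bext; rewrite /c; bsimpl; bfin.
have Ed : d = Nat.ldiff p q + Nat.ldiff q p by rewrite add_disj //; bext; rewrite /d; bsimpl; bfin.
split.
- lia.
- by bext; rewrite /c /d; bsimpl; bfin.
have Sp : sz p = (sz (Nat.ldiff p q) * sz c)%R by rewrite {1}Ep sz_add.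
have Sq : sz q = (sz (Nat.ldiff q p) * sz c)%R by rewrite {1}Eq sz_add.
have Sd : sz d = (sz (Nat.ldiff p q) * sz (Nat.ldiff q p))%R by rewrite Ed sz_add.
rewrite Sd Sp Sq mulrACA.
have -> : (sz c * sz c = 1)%R by rewrite /sz -exprD addnn -mul2n exprM sqrrN !expr1n.
by rewrite mulr1.
Qed.

Lemma stepB m p q : (\sum_(k < m.+1 | Good m p q k) sz k)%R =
  if p + q == m then (sz p * sz q)%R else 0%R.
Proof.
rewrite (bigID (fun k : 'I_m.+1 => Nat.ldiff (Nat.land p q) (m - Nat.lor k p) == 0)) /= stage1 addr0.
under eq_bigl => k do rewrite good2.
have [E1 E2 E3] := pqE p q.
case Hcond: ((2 * Nat.land p q <= m)%N && (Nat.land (m - 2 * Nat.land p q) (Nat.land p q) == 0)).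
  under eq_bigl => k do rewrite andbT.
  rewrite interval ?leq_subr //.
  move/andP: Hcond => [H2 /eqP HY].
  have -> : (m - 2 * Nat.land p q == Nat.lxor p q) = (p + q == m).
    apply/eqP/eqP; lia.
  by case: (p + q == m); rewrite ?E3.
rewrite big_pred0 => [|k]; last by rewrite !andbF.
case: eqP => // Em; move: Hcond.
have -> : (2 * Nat.land p q <= m)%N by lia.
have -> : m - 2 * Nat.land p q = Nat.lxor p q by lia.
by rewrite E2 eqxx.
Qed.

Local Open Scope ring_scope.

Lemma sum_nat1 (lo hi w : nat) (G : int) :
  \sum_(lo <= j < hi) (if j == w then G else 0) = if (lo <= w < hi)%N then G else 0.
Proof.
case: ifP => H.
  rewrite (bigD1_seq w) ?mem_index_iota ?iota_uniq //= eqxx big1 ?addr0 // => j /negbTE -> //.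
rewrite big1_seq // => j; rewrite mem_index_iota; case: eqP => // -> /andP[_]; by rewrite H.
Qed.

Lemma prod_if (b1 b2 c1 b3 c2 b4 : bool) (x y : int) :
  (b1 : nat)%:R * (b2 : nat)%:R * (if c1 then (b3 : nat)%:R * x else 0) * (if c2 then (b4 : nat)%:R * y else 0)
  = if [&& b1, b2, c1, b3, c2 & b4] then x * y else 0.
Proof.
by case: b1; case: b2; case: c1; case: b3; case: c2; case: b4; rewrite /= ?mul0r ?mulr0 ?mul1r ?mulr1.
Qed.

Definition Gz m k j p q : int :=
  (Tsier (k + m - j) k : nat)%:R * (Tsier j k : nat)%:R *
  (if (j - k <= p)%N && (p < j.+1)%N then (Tsier k (j - p) : nat)%:R * sz p else 0) *
  (if (j - k <= q)%N && (q < j.+1)%N then (Tsier k (j - q) : nat)%:R * sz q else 0).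

Lemma sz_sq p : sz p * sz p = 1.
Proof. by rewrite /sz -exprD addnn -mul2n exprM sqrrN !expr1n. Qed.

Lemma Cz_val m p q :
  \sum_(k < m.+1) \sum_(k <= j < m.+1) sz k * Gz m k j p q = ((p + q == m) : nat)%:R.
Proof.
have E : forall k : 'I_m.+1, \sum_(k <= j < m.+1) sz k * Gz m k j p q =
    sz k * (if Good m p q k then sz p * sz q else 0).
  move=> k; rewrite -mulr_sumr; congr (_ * _).
  rewrite big_seq_cond.
  under eq_bigr => j /andP[Hj _].
    rewrite mem_index_iota in Hj; case/andP: Hj => Hkj Hjm.
    rewrite /Gz prod_if.
    have K := key k j p q m (ltnSE Hjm); rewrite Hkj /= in K; rewrite K.
    over.
  rewrite -big_seq_cond.
  transitivity (\sum_(k <= j < m.+1) (if j == Nat.lor k p then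
     (if [&& Nat.lor k p == Nat.lor k q & Nat.land k (m - Nat.lor k p) == 0] then sz p * sz q else 0) else 0)).
    by apply: eq_bigr => j _; case: eqP => [->|].
  rewrite sum_nat1 /Good le_lor /= ltnS.
  by case: (Nat.lor k p == Nat.lor k q); case: (Nat.lor k p <= m)%N.
rewrite (eq_bigr _ (fun k _ => E k)).
rewrite (eq_bigr (fun k : 'I_m.+1 => (if Good m p q k then sz k else 0) * (sz p * sz q))) => [|k _]; last first.
  by case: (Good m p q k); rewrite ?mulr0 ?mul0r.
rewrite -big_distrl -big_mkcond /= stepB.
case: (p + q == m); rewrite ?mul0r //= mulrC mulrA.
by rewrite -[sz p * sz q * sz p]mulrA [sz q * _]mulrC mulrA sz_sq mul1r sz_sq.
Qed.

Lemma range_conv (R : comPzRingType) (lo j m : nat) (F : nat -> R) : (j < m.+1)%N ->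
  \sum_(lo <= t < j.+1) F t = \sum_(t < m.+1) (if (lo <= t)%N && (t < j.+1)%N then F t else 0).
Proof.
move=> Hj; rewrite big_geq_mkord (big_ord_widen_cond m.+1) // big_mkcond.
by apply: eq_bigr => t _.
Qed.

Lemma sigmaE (R : comPzRingType) t : sigma R t = (sz t)%:~R.
Proof. by rewrite /sigma /sz rmorph_sign. Qed.

Lemma inner (R : comPzRingType) (a b : nat -> R) m (k j : nat) : (j < m.+1)%N ->
  sigma R k *
      ((Tsier (k + m - j) k)%:R * (Tsier j k)%:R *
       (\sum_(j - k <= t < j.+1) (Tsier k (j - t))%:R * sigma R t * a t) *
       (\sum_(j - k <= t < j.+1) (Tsier k (j - t))%:R * sigma R t * b t))
  = \sum_(p < m.+1) \sum_(q < m.+1) a p * b q * (sz k * Gz m k j p q)%:~R.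
Proof.
move=> Hj; rewrite !(range_conv _ _ _ _ _ Hj) -mulrA big_distrlr /= !mulr_sumr.
apply: eq_bigr => p _; rewrite !mulr_sumr; apply: eq_bigr => q _.
rewrite /Gz; case: ifP => _; case: ifP => _;
  rewrite ?mul0r ?mulr0 ?rmorph0 // !intrM !rmorph_nat -!sigmaE; ring.
Qed.

Theorem mainTheorem5 (R : comPzRingType) (a b : nat -> R) (m : nat) :
  \sum_(i < m.+1) a i * b (m - i)%N =
  \sum_(k < m.+1) sigma R k *
    \sum_(k <= j < m.+1)
      ((Tsier (k + m - j) k)%:R * (Tsier j k)%:R *
       (\sum_(j - k <= t < j.+1) (Tsier k (j - t))%:R * sigma R t * a t) *
       (\sum_(j - k <= t < j.+1) (Tsier k (j - t))%:R * sigma R t * b t)).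
Proof.
symmetry.
transitivity (\sum_(k < m.+1) \sum_(k <= j < m.+1) \sum_(p < m.+1) \sum_(q < m.+1)
                 a p * b q * (sz k * Gz m k j p q)%:~R).
  apply: eq_bigr => k _; rewrite mulr_sumr big_seq_cond [RHS]big_seq_cond.
  apply: eq_bigr => j /andP[Hj _]; rewrite mem_index_iota in Hj.
  by apply: inner; case/andP: Hj.
under eq_bigr => k _ do rewrite exchange_big.
under eq_bigr => k _ do under eq_bigr => p _ do rewrite exchange_big.
rewrite exchange_big.
under eq_bigr => p _ do rewrite exchange_big.
transitivity (\sum_(p < m.+1) \sum_(q < m.+1) a p * b q * (((p : nat) + (q : nat))%N == m : nat)%:R).
  apply: eq_bigr => p _; apply: eq_bigr => q _.
  have H := congr1 (fun z : int => (z%:~R : R)) (Cz_val m p q); rewrite /= rmorph_nat in H.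
  rewrite -H rmorph_sum mulr_sumr; apply: eq_bigr => k _.
  by rewrite rmorph_sum mulr_sumr.
apply: eq_bigr => p _.
rewrite (bigD1 (Ordinal (leq_subr p m : (m - p < m.+1)%N))) //= big1 ?addr0.
  have -> : ((p : nat) + (m - p) == m)%N = true by apply/eqP; have := ltn_ord p; lia.
  by rewrite mulr1.
move=> q Hq; have -> : ((p : nat) + (q : nat) == m)%N = false.
  apply/eqP => E; move: Hq; rewrite -val_eqE /=.
  have -> : (m - p = q)%N by lia.
  by rewrite eqxx.
by rewrite mulr0.
Qed.
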